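(* Let $\Omega\subseteq\mathbb{R}^n$ be open. The sets $\mathbb{G}_{bd}(\Omega)$, $\mathbb{G}_{ft}(\Omega)$, $\mathbb{G}_{nf}(\Omega)$ and $\mathbb{G}(\Omega)$ are all Dedekind order complete with respect to the inclusion order $\subseteq$, where $f\subseteq g$ means $f(x)\subseteq g(x)$ for all $x\in\Omega$.
   Context: $\overline{\mathbb{R}}=\mathbb{R}\cup\{\pm\infty\}$, $\mathbb{I}\overline{\mathbb{R}}$ is the set of closed intervals $[\underline a,\overline a]$ with $\underline a\le\overline a$ in $\overline{\mathbb{R}}$, $a\in\overline{\mathbb{R}}$ identified with $[a,a]$. $\mathbb{A}(X)$ is the set of functions $X\to\mathbb{I}\overline{\mathbb{R}}$. $B_\delta(x)=\{y\in\Omega:\|x-y\|<\delta\}$. For dense $D\subseteq\Omega$ and $f\in\mathbb{A}(D)$: $I(D,\Omega,f)(x)=\sup_{\delta>0}\inf\{z\in f(y):y\in B_\delta(x)\cap D\}$, $S(D,\Omega,f)(x)=\inf_{\delta>0}\sup\{z\in f(y):y\in B_\delta(x)\cap D\}$, $F(D,\Omega,f)(x)=[I(D,\Omega,f)(x),S(D,\Omega,f)(x)]$. $f\in\mathbb{A}(\Omega)$ is D-continuous if $F(D,\Omega,f)=f$ for every dense $D\subseteq\Omega$; $\mathbb{G}(\Omega)$ is the set of D-continuous functions, and $\mathbb{G}_{bd}(\Omega)$, $\mathbb{G}_{ft}(\Omega)$, $\mathbb{G}_{nf}(\Omega)$ are its subsets of bounded, finite and nearly finite functions: $f$ is bounded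 if there is $M\in\mathbb{R}$ with $f(x)\subseteq[-M,M]$ for all $x$; finite if both endpoints of $f(x)$ are real for all $x$; nearly finite if there is an open dense $D\subseteq\Omega$ on which $f$ is finite. A poset is Dedekind order complete if every nonempty subset bounded above has a supremum in it and every nonempty subset bounded below has an infimum in it. *)

(* Defs.v *)
From HB Require Import structures.
From mathcomp Require Import all_boot all_order all_algebra.
From mathcomp Require Import all_classical all_reals.
From mathcomp Require Import ereal Rstruct.
From Stdlib Require Import Rdefinitions.
Set Implicit Arguments. Unset Strict Implicit. Unset Printing Implicit Defensive.
Import Order.TTheory GRing.Theory Num.Theory.
Local Open Scope classical_set_scope.
Local Open Scope ring_scope.

Notation R := Rdefinitions.R.

Definition pt (n : nat) := 'I_n -> R.

Definition edist n (x y : pt n) : R :=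
  Num.sqrt (\sum_(i < n) (x i - y i) ^+ 2).

Definition ball_in n (Omega : set (pt n)) (x : pt n) (delta : R) : set (pt n) :=
  [set y | Omega y /\ edist x y < delta].

Definition is_open n (U : set (pt n)) : Prop :=
  forall x, U x -> exists2 delta : R, 0 < delta & forall y, edist x y < delta -> U y.

Definition dense_in n (D Omega : set (pt n)) : Prop :=
  D `<=` Omega /\
  forall x, Omega x -> forall delta : R, 0 < delta -> exists2 y, D y & edist x y < delta.

Record ival := Ival { lo : \bar R; hi : \bar R; lo_le_hi : (lo <= hi)%E }.

Definition in_ival (z : \bar R) (a : ival) : Prop := (lo a <= z)%E /\ (z <= hi a)%E.

Definition dom n (Omega : set (pt n)) := {x : pt n | Omega x}.
Definition Afun n (Omega : set (pt n)) := dom Omega -> ival.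

(* I(D,Omega,f)(x) and S(D,Omega,f)(x), for f defined on Omega (only its values on D
   are used). *)
Definition Iop n (Omega D : set (pt n)) (f : Afun Omega) (x : pt n) : \bar R :=
  ereal_sup [set ereal_inf [set z | exists y : dom Omega,
                 D (sval y) /\ ball_in Omega x delta (sval y) /\ in_ival z (f y)]
            | delta in [set delta : R | 0 < delta]].

Definition Sop n (Omega D : set (pt n)) (f : Afun Omega) (x : pt n) : \bar R :=
  ereal_inf [set ereal_sup [set z | exists y : dom Omega,
                 D (sval y) /\ ball_in Omega x delta (sval y) /\ in_ival z (f y)]
            | delta in [set delta : R | 0 < delta]].

(* f is D-continuous: F(D,Omega,f) = f for every dense D subset of Omega. *)
Definition Dcont n (Omega : set (pt n)) (f : Afun Omega) : Prop :=
  forall D, dense_in D Omega ->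
    forall x : dom Omega, Iop D f (sval x) = lo (f x) /\ Sop D f (sval x) = hi (f x).

Definition G n (Omega : set (pt n)) : set (Afun Omega) := [set f | Dcont f].
Arguments G {n} Omega _.

Definition bounded_fun n (Omega : set (pt n)) (f : Afun Omega) : Prop :=
  exists M : R, forall x, ((- M)%:E <= lo (f x))%E /\ (hi (f x) <= M%:E)%E.

Definition finite_fun n (Omega : set (pt n)) (f : Afun Omega) : Prop :=
  forall x, lo (f x) \is a fin_num /\ hi (f x) \is a fin_num.

Definition nearly_finite_fun n (Omega : set (pt n)) (f : Afun Omega) : Prop :=
  exists D : set (pt n), is_open D /\ dense_in D Omega /\
    forall x : dom Omega, D (sval x) -> lo (f x) \is a fin_num /\ hi (f x) \is a fin_num.

Definition G_bd n (Omega : set (pt n)) := [set f | G Omega f /\ bounded_fun f].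
Arguments G_bd {n} Omega _.
Definition G_ft n (Omega : set (pt n)) := [set f | G Omega f /\ finite_fun f].
Arguments G_ft {n} Omega _.
Definition G_nf n (Omega : set (pt n)) := [set f | G Omega f /\ nearly_finite_fun f].
Arguments G_nf {n} Omega _.

Definition ival_incl n (Omega : set (pt n)) (f g : Afun Omega) : Prop :=
  forall x, (lo (g x) <= lo (f x))%E /\ (hi (f x) <= hi (g x))%E.

Definition upper_bound T (P S : set T) (le : T -> T -> Prop) (u : T) :=
  P u /\ forall f, S f -> le f u.
Definition lower_bound T (P S : set T) (le : T -> T -> Prop) (l : T) :=
  P l /\ forall f, S f -> le l f.

Definition dedekind_complete T (P : set T) (le : T -> T -> Prop) : Prop :=
  (forall S, S `<=` P -> S !=set0 -> (exists u, upper_bound P S le u) ->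
     exists s, upper_bound P S le s /\ forall u, upper_bound P S le u -> le s u) /\
  (forall S, S `<=` P -> S !=set0 -> (exists l, lower_bound P S le l) ->
     exists i, lower_bound P S le i /\ forall l, lower_bound P S le l -> le l i).
Arguments ival_incl {n} Omega f g.

(* Main.v *)
Require Import Defs.
From mathcomp Require Import all_boot all_order all_algebra.
From mathcomp Require Import all_classical all_reals.
From mathcomp Require Import ereal Rstruct.
From mathcomp Require Import ring lra.
Set Implicit Arguments. Unset Strict Implicit. Unset Printing Implicit Defensive.
Import Order.TTheory GRing.Theory Num.Theory.
Local Open Scope classical_set_scope.
Local Open Scope ring_scope.
Section Metric.
Variable n : nat.
Implicit Types x y z : pt n.

Lemma edist_ge0 x y : 0 <= edist x y.
Proof. exact: sqrtr_ge0. Qed.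

Lemma edist_xx x : edist x x = 0.
Proof. by rewrite /edist big1 ?sqrtr0 // => i _; rewrite subrr expr0n. Qed.

Lemma edist_sym x y : edist x y = edist y x.
Proof. by rewrite /edist; congr Num.sqrt; apply: eq_bigr => i _; rewrite -sqrrN opprB. Qed.

Lemma cs (a b : 'I_n -> R) :
  \sum_i a i * b i <= Num.sqrt (\sum_i a i ^+ 2) * Num.sqrt (\sum_i b i ^+ 2).
Proof.
set A := \sum_i a i ^+ 2; set B := \sum_i b i ^+ 2; set C := \sum_i a i * b i.
have A0 : 0 <= A by apply: sumr_ge0 => i _; exact: sqr_ge0.
have B0 : 0 <= B by apply: sumr_ge0 => i _; exact: sqr_ge0.
have key : C ^+ 2 <= A * B.
  have [Bz|Bp] := eqVneq B 0.
    have bz : forall i, b i = 0.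
      move=> i; apply/eqP; rewrite -sqrf_eq0; apply/eqP.
      by apply: (psumr_eq0P (P := xpredT) (fun i _ => sqr_ge0 (b i)) Bz).
    have -> : C = 0 by rewrite /C big1 // => i _; rewrite bz mulr0.
    by rewrite Bz expr0n mulr0.
  have Bpos : 0 < B by rewrite lt_def Bp B0.
  have H : 0 <= \sum_i (B * a i - C * b i) ^+ 2 by apply: sumr_ge0 => i _; exact: sqr_ge0.
  have E : \sum_i (B * a i - C * b i) ^+ 2 =
      \sum_i (B ^+ 2 * a i ^+ 2 - (2 * B * C) * (a i * b i) + C ^+ 2 * b i ^+ 2).
    by apply: eq_bigr => i _; ring.
  rewrite E big_split /= sumrB -!mulr_sumr -/A -/B -/C in H.
  nra.
have : C <= `|C| := ler_norm C.
rewrite -sqrtrM // -sqrtr_sqr => h; apply: (le_trans h); exact: ler_wsqrtr.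
Qed.

Lemma edist_tri x y z : edist x z <= edist x y + edist y z.
Proof.
rewrite /edist.
set a := fun i => x i - y i; set b := fun i => y i - z i.
have e : \sum_i (x i - z i) ^+ 2 = \sum_i a i ^+ 2 + 2 * \sum_i a i * b i + \sum_i b i ^+ 2.
  rewrite mulr_sumr -!big_split /=; apply: eq_bigr => i _; rewrite /a /b; ring.
rewrite e.
have := cs a b.
set A := \sum_i a i ^+ 2; set B := \sum_i b i ^+ 2; set C := \sum_i a i * b i => h.
have A0 : 0 <= A by apply: sumr_ge0 => i _; exact: sqr_ge0.
have B0 : 0 <= B by apply: sumr_ge0 => i _; exact: sqr_ge0.
have sA := sqrtr_ge0 A; have sB := sqrtr_ge0 B.
have -> : A + 2 * C + B = Num.sqrt A ^+ 2 + 2 * C + Num.sqrt B ^+ 2 by rewrite !sqr_sqrtr.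
rewrite -[X in _ <= X]ger0_norm ?addr_ge0 // -sqrtr_sqr; apply: ler_wsqrtr; nra.
Qed.
End Metric.

Local Open Scope ereal_scope.

Lemma ereal_dense (a b : \bar R) : a < b -> exists c, a < c /\ c < b.
Proof.
case: a => [a| |]; case: b => [b| |] //= ab.
- have [h1 h2] := midf_lt ab.
  by exists ((a + b) / 2)%R%:E; rewrite !lte_fin.
- exists (a + 1)%R%:E; rewrite lte_fin ltey; split => //; rewrite ltrDl; exact: ltr01.
- exists (b - 1)%R%:E; rewrite lte_fin ltNye; split => //; rewrite gtrBl; exact: ltr01.
- by exists 0%E.
Qed.

Section Main.
Variables (n : nat) (Omega : set (pt n)).
Local Notation dm := (dom Omega).
Local Notation fn := (dm -> \bar R).

Definition Bset (D : set (pt n)) (x : pt n) (delta : R) : set dm :=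
  [set y : dm | D (sval y) /\ ball_in Omega x delta (sval y)].

Definition Ifun (D : set (pt n)) (h : fn) (x : pt n) : \bar R :=
  ereal_sup [set ereal_inf (h @` Bset D x delta) | delta in [set delta : R | (0 < delta)%R]].

Definition Sfun (h : fn) (x : pt n) : \bar R :=
  ereal_inf [set ereal_sup (h @` Bset Omega x delta) | delta in [set delta : R | (0 < delta)%R]].

Definition Lc (h : fn) := forall D, dense_in D Omega -> forall x : dm, Ifun D h (sval x) = h x.

Lemma BsetE D x delta (y : dm) : Bset D x delta y <-> D (sval y) /\ (edist x (sval y) < delta)%R.
Proof.
rewrite /Bset /ball_in /=; split; first by case=> ? [].
by case=> ? ?; split => //; split => //; exact: proj2_sig y.
Qed.

Lemma Iop_eq D (f : Afun Omega) x : Iop D f x = Ifun D (fun y => lo (f y)) x.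
Proof.
rewrite /Iop /Ifun; congr ereal_sup; apply: eq_imagel => d _.
apply/le_anti/andP; split.
  apply: ereal_inf_le_tmp => _ [y yB <-]; exists y; split; first by case: yB.
  by split; [case: yB| split; [exact: lexx| exact: lo_le_hi]].
apply: le_ereal_inf_tmp => z [y [Dy [By hz]]]; case: hz => hz _.
by apply: le_trans hz; apply: ereal_inf_lbound; exists y.
Qed.

Lemma Sop_eq D (f : Afun Omega) x : Sop D f x = - Ifun D (fun y => - hi (f y)) x.
Proof.
rewrite /Sop /Ifun.
have -> : [set ereal_inf [set - hi (f y) | y in Bset D x d] | d in [set d : R | (0 < d)%R]] =
   -%E @` [set ereal_sup [set z | exists y : dm, D (sval y) /\ ball_in Omega x d (sval y) /\
          in_ival z (f y)] | d in [set d : R | (0 < d)%R]].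
  rewrite image_comp; apply: eq_imagel => d _ /=.
  have -> : [set - hi (f y) | y in Bset D x d] = -%E @` [set hi (f y) | y in Bset D x d].
    by rewrite image_comp.
  rewrite ereal_infN; congr (- _).
  apply/le_anti/andP; split.
    apply: ereal_sup_le => _ [y yB <-]; exists y; split; first by case: yB.
    by split; [case: yB| split; [exact: lo_le_hi| exact: lexx]].
  apply: ge_ereal_sup => z [y [Dy [By hz]]]; case: hz => _ hz.
  by apply: le_trans hz _; apply: ereal_sup_ubound; exists y.
by rewrite ereal_supN oppeK.
Qed.

Lemma Dcont_iff (f : Afun Omega) :
  Dcont f <-> Lc (fun y => lo (f y)) /\ Lc (fun y => - hi (f y)).
Proof.
split.
  move=> H; split => D dD x; have [h1 h2] := H D dD x.
    by rewrite -Iop_eq.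
  by rewrite Sop_eq in h2; rewrite -h2; apply/esym; apply: oppeK.
case=> H1 H2 D dD x; split; first by rewrite Iop_eq H1.
by rewrite Sop_eq (H2 D dD) /=; apply: oppeK.
Qed.


Lemma I_le D h (x : dm) : D (sval x) -> Ifun D h (sval x) <= h x.
Proof.
move=> Dx; apply: ge_ereal_sup => _ [d /= d0 <-]; apply: ereal_inf_lbound.
by exists x => //; apply/BsetE; split => //; rewrite edist_xx.
Qed.

Lemma I_ge D h p d : (0 < d)%R -> ereal_inf (h @` Bset D p d) <= Ifun D h p.
Proof. by move=> d0; apply: ereal_sup_ubound; exists d. Qed.

Lemma I_gt D h p c : c < Ifun D h p ->
  exists2 d, (0 < d)%R & c < ereal_inf (h @` Bset D p d).
Proof. by move/ereal_sup_gt => [_ [d /= d0 <-] cl]; exists d. Qed.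

Lemma inf_lt (A : set dm) (h : fn) c : ereal_inf (h @` A) < c -> exists2 y, A y & h y < c.
Proof. by move/ereal_inf_lt => [_ [y Ay <-] hc]; exists y. Qed.

Lemma I_monoD D h p : D `<=` Omega -> Ifun Omega h p <= Ifun D h p.
Proof.
move=> DO; apply: ge_ereal_sup => _ [d /= d0 <-]; apply: le_trans _ (I_ge _ _ _ d0).
apply: ereal_inf_le_tmp; apply: image_subset => y /BsetE [Dy By]; apply/BsetE; split => //.
exact: DO.
Qed.

Lemma I_monoh D (h g : fn) p : (forall y, h y <= g y) -> Ifun D h p <= Ifun D g p.
Proof.
move=> hg; apply: ge_ereal_sup => _ [d /= d0 <-]; apply: le_trans _ (I_ge _ _ _ d0).
apply: le_ereal_inf_tmp => _ [y By <-]; apply: le_trans (hg y).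
by apply: ereal_inf_lbound; exists y.
Qed.

Lemma S_ge (h : fn) (x : dm) : h x <= Sfun h (sval x).
Proof.
apply: le_ereal_inf_tmp => _ [d /= d0 <-]; apply: ereal_sup_ubound.
by exists x => //; apply/BsetE; split; [exact: proj2_sig x| rewrite edist_xx].
Qed.

Lemma S_le h p d : (0 < d)%R -> Sfun h p <= ereal_sup (h @` Bset Omega p d).
Proof. by move=> d0; apply: ereal_inf_lbound; exists d. Qed.

Lemma S_lt h p c : Sfun h p < c ->
  exists2 d, (0 < d)%R & ereal_sup (h @` Bset Omega p d) < c.
Proof. by move/ereal_inf_lt => [_ [d /= d0 <-] cl]; exists d. Qed.

Lemma S_monoh (h g : fn) p : (forall y, h y <= g y) -> Sfun h p <= Sfun g p.
Proof.
move=> hg; apply: le_ereal_inf_tmp => _ [d /= d0 <-]; apply: le_trans (S_le h p d0) _.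
apply: ge_ereal_sup => _ [y By <-]; apply: le_trans (hg y) _.
by apply: ereal_sup_ubound; exists y.
Qed.

Definition lsc (h : fn) := forall x : dm, Ifun Omega h (sval x) = h x.
Definition Pp (h : fn) := forall (x : dm) c, h x < c -> forall d, (0 < d)%R ->
  exists y : dm, exists e : R, (0 < e)%R /\ forall w : dm,
    (edist (sval y) (sval w) < e)%R -> (edist (sval x) (sval w) < d)%R /\ h w < c.

Lemma dense_self : dense_in Omega Omega.
Proof. by split => // x hx d d0; exists x => //; rewrite edist_xx. Qed.

Lemma Lc_lsc h : Lc h -> lsc h.
Proof. by move=> H x; apply: (H Omega dense_self). Qed.

Lemma Lc_P h : Lc h -> Pp h.
Proof.
move=> H x c hc d d0; apply: contrapT => N.
pose D := fun p : pt n => Omega p /\ forall hp : Omega p,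
   ~ ((edist (sval x) p < d)%R /\ h (exist _ p hp) < c).
have dD : dense_in D Omega.
  split; first by move=> p [].
  move=> z hz e e0; apply: contrapT => N2; apply: N; exists (exist _ z hz), e.
  split => // -[p hp] /= hzp.
  apply: contrapT => N3; apply: N2; exists p => //; split => // hp'.
  by have -> : hp' = hp by exact: Prop_irrelevance.
have E := H D dD x.
have : c <= Ifun D h (sval x).
  apply: le_trans _ (I_ge _ _ _ d0); apply: le_ereal_inf_tmp => _ [[p hp] /BsetE [[_ Np] dp] <-].
  by rewrite leNgt; apply/negP => hlt; apply: (Np hp); split.
by rewrite E leNgt hc.
Qed.

Lemma lsc_P_Lc h : lsc h -> Pp h -> Lc h.
Proof.
move=> H1 H2 D [DO dD] x; apply/le_anti/andP; split; last first.
  by rewrite -[X in X <= _](H1 x); apply: I_monoD.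
rewrite leNgt; apply/negP => /I_gt [d d0 lt].
have [y [e [e0 Hy]]] := H2 x _ lt d d0.
have [p Dp dp] := dD (sval y) (proj2_sig y) e e0.
have [dx hw] := Hy (exist _ p (DO p Dp)) dp.
have : ereal_inf (h @` Bset D (sval x) d) <= h (exist _ p (DO p Dp)).
  by apply: ereal_inf_lbound; exists (exist _ p (DO p Dp)) => //; apply/BsetE; split.
by rewrite leNgt hw.
Qed.

Lemma ball_open (p : pt n) (z : dm) d : (edist p (sval z) < d)%R ->
  forall w : dm, (edist (sval z) (sval w) < d - edist p (sval z))%R ->
  (edist p (sval w) < d)%R.
Proof. move=> pz w zw; have t := edist_tri p (sval z) (sval w); lra. Qed.

Lemma I_lsc (g : fn) : lsc (fun y => Ifun Omega g (sval y)).
Proof.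
move=> x; apply/le_anti/andP; split; first by apply: I_le; exact: proj2_sig x.
apply: ge_ereal_sup => _ [d /= d0 <-].
have d20 : (0 < d / 2)%R by rewrite divr_gt0.
apply: le_trans _ (I_ge _ _ _ d20); apply: le_ereal_inf_tmp => _ [y /BsetE [_ hy] <-].
apply: le_trans _ (I_ge _ _ _ d20); apply: ereal_inf_le_tmp; apply: image_subset.
move=> w /BsetE [Ow hw]; apply/BsetE; split => //.
have t := edist_tri (sval x) (sval y) (sval w); lra.
Qed.

Lemma caseA (H : set fn) : H `<=` Lc -> exists m, Lc m /\
  (forall h, H h -> forall y, m y <= h y) /\
  (forall h', Lc h' -> (forall h, H h -> forall y, h' y <= h y) -> forall y, h' y <= m y).
Proof.
move=> HL.
pose phi : fn := fun y => ereal_inf [set h y | h in H].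
pose m : fn := fun y => Ifun Omega phi (sval y).
have mphi : forall y, m y <= phi y by move=> y; apply: I_le; exact: proj2_sig y.
have phih : forall h, H h -> forall y, phi y <= h y.
  by move=> h Hh y; apply: ereal_inf_lbound; exists h.
exists m; split; last split.
- apply: lsc_P_Lc; first exact: I_lsc.
  move=> x c mc d d0.
  have : ereal_inf (phi @` Bset Omega (sval x) d) < c by apply: le_lt_trans mc; apply: I_ge.
  move/inf_lt => [z /BsetE [_ xz] pz].
  have [_ [h Hh <-] hz] := ereal_inf_lt pz.
  have e0 : (0 < d - edist (sval x) (sval z))%R by rewrite subr_gt0.
  have [y [e [e0' Hy]]] := Lc_P (HL h Hh) hz e0.
  exists y, e; split => // w yw; have [zw hw] := Hy w yw; split.
    exact: ball_open zw.
  by apply: le_lt_trans hw; apply: le_trans (mphi w) _; apply: phih.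
- by move=> h Hh y; apply: le_trans (mphi y) _; apply: phih.
- move=> h' Lh' hh y; rewrite -(Lc_lsc Lh' y); apply: I_monoh => w.
  by apply: le_ereal_inf_tmp => _ [h Hh <-]; apply: hh.
Qed.

Lemma IS_le h : Lc h -> forall y : dm, Ifun Omega (fun w => Sfun h (sval w)) (sval y) <= h y.
Proof.
move=> Lh y; rewrite leNgt; apply/negP => /I_gt [d d0 lt].
have [c [hc ce]] := ereal_dense lt.
have [y0 [e [e0 Hy]]] := Lc_P Lh hc d0.
have yy0 : (edist (sval y) (sval y0) < d)%R by case: (Hy y0) => //; rewrite edist_xx.
have A : ereal_inf ((fun w => Sfun h (sval w)) @` Bset Omega (sval y) d) <= Sfun h (sval y0).
  apply: ereal_inf_lbound; exists y0 => //; apply/BsetE; split => //; exact: proj2_sig y0.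
have B := S_le h (sval y0) e0.
have C : ereal_sup (h @` Bset Omega (sval y0) e) <= c.
  by apply: ge_ereal_sup => _ [w /BsetE [_ hw] <-]; apply/ltW; case: (Hy w hw).
by have := le_trans A (le_trans B C); rewrite leNgt ce.
Qed.

Lemma caseB (H : set fn) : H `<=` Lc -> exists m, Lc m /\
  (forall h, H h -> forall y, h y <= m y) /\
  (forall h', Lc h' -> (forall h, H h -> forall y, h y <= h' y) -> forall y, m y <= h' y).
Proof.
move=> HL.
pose phi : fn := fun y => ereal_sup [set h y | h in H].
pose sp : fn := fun y => Sfun phi (sval y).
pose m : fn := fun y => Ifun Omega sp (sval y).
have hphi : forall h, H h -> forall y, h y <= phi y.
  by move=> h Hh y; apply: ereal_sup_ubound; exists h.
exists m; split; last split.
- apply: lsc_P_Lc; first exact: I_lsc.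
  move=> x c mc d d0.
  have : ereal_inf (sp @` Bset Omega (sval x) d) < c by apply: le_lt_trans mc; apply: I_ge.
  move/inf_lt => [z /BsetE [_ xz] pz].
  have [e e0 se] := S_lt pz.
  have e1 : (0 < d - edist (sval x) (sval z))%R by rewrite subr_gt0.
  exists z, (Num.min e (d - edist (sval x) (sval z)))%R; split; first by rewrite lt_min e0 e1.
  move=> w; rewrite lt_min => /andP [zw1 zw2]; split; first exact: ball_open zw2.
  have mw : m w <= sp w by apply: I_le; exact: proj2_sig w.
  apply: le_lt_trans mw _; apply: le_lt_trans se.
  have e2 : (0 < e - edist (sval z) (sval w))%R by rewrite subr_gt0.
  apply: le_trans (S_le _ _ e2) _; apply: ereal_sup_le; apply: image_subset.
  move=> v /BsetE [Ov hv]; apply/BsetE; split => //.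
  exact: ball_open hv.
- move=> h Hh y; rewrite -(Lc_lsc (HL h Hh) y); apply: I_monoh => w.
  exact: le_trans (hphi h Hh w) (S_ge phi w).
- move=> h' Lh' hh y; apply: le_trans _ (IS_le Lh' y); apply: I_monoh => w; apply: S_monoh => v.
  by apply: ge_ereal_sup => _ [h Hh <-]; apply: hh.
Qed.

End Main.

Section GLevel.
Variables (n : nat) (Omega : set (pt n)).
Local Notation dm := (dom Omega).

Lemma G_Lc (f : Afun Omega) : G Omega f -> Lc (fun y => lo (f y)) /\ Lc (fun y => - hi (f y)).
Proof. by move=> Gf; apply/Dcont_iff. Qed.

Lemma sup_G (S : set (Afun Omega)) : S `<=` G Omega -> S !=set0 ->
  exists s, G Omega s /\ (forall f, S f -> ival_incl Omega f s) /\
    (forall u, G Omega u -> (forall f, S f -> ival_incl Omega f u) -> ival_incl Omega s u).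
Proof.
move=> SG [f0 Sf0].
have HLc : [set (fun y => lo (f y)) | f in S] `<=` @Lc n Omega.
  by move=> _ [f Sf <-]; case: (G_Lc (SG f Sf)).
have HUc : [set (fun y => - hi (f y)) | f in S] `<=` @Lc n Omega.
  by move=> _ [f Sf <-]; case: (G_Lc (SG f Sf)).
have [mL [LmL [mL1 mL2]]] := caseA HLc.
have [mU [LmU [mU1 mU2]]] := caseA HUc.
have pf : forall x, mL x <= - mU x.
  move=> x; have a := mL1 _ (imageP (fun f => (fun y => lo (f y))) Sf0) x.
  have b := mU1 _ (imageP (fun f => (fun y => - hi (f y))) Sf0) x.
  rewrite /= leeNr in b.
  exact: le_trans a (le_trans (lo_le_hi _) b).
pose s := fun x => Ival (pf x).
exists s; split.
  apply/Dcont_iff; split => //=.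
  have -> : (fun y => - hi (s y)) = mU by apply: funext => y /=; rewrite oppeK.
  exact: LmU.
split.
  move=> f Sf x; split => /=.
    exact: (mL1 _ (imageP (fun f => (fun y => lo (f y))) Sf) x).
  rewrite leeNr; exact: (mU1 _ (imageP (fun f => (fun y => - hi (f y))) Sf) x).
move=> u Gu uf x; have [Lu1 Lu2] := G_Lc Gu; split => /=.
  by apply: (mL2 _ Lu1) => _ [f Sf <-] y; case: (uf f Sf y).
rewrite leeNl; apply: (mU2 _ Lu2) => _ [f Sf <-] y /=.
by rewrite leeN2; case: (uf f Sf y).
Qed.

Lemma inf_G (S : set (Afun Omega)) l : S `<=` G Omega -> G Omega l ->
  (forall f, S f -> ival_incl Omega l f) ->
  exists s, G Omega s /\ (forall f, S f -> ival_incl Omega s f) /\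
    (forall u, G Omega u -> (forall f, S f -> ival_incl Omega u f) -> ival_incl Omega u s).
Proof.
move=> SG Gl lS.
have HLc : [set (fun y => lo (f y)) | f in S] `<=` @Lc n Omega.
  by move=> _ [f Sf <-]; case: (G_Lc (SG f Sf)).
have HUc : [set (fun y => - hi (f y)) | f in S] `<=` @Lc n Omega.
  by move=> _ [f Sf <-]; case: (G_Lc (SG f Sf)).
have [mL [LmL [mL1 mL2]]] := caseB HLc.
have [mU [LmU [mU1 mU2]]] := caseB HUc.
have [Ll1 Ll2] := G_Lc Gl.
have pf : forall x, mL x <= - mU x.
  move=> x; have a : mL x <= lo (l x).
    by apply: (mL2 _ Ll1) => _ [f Sf <-] y; case: (lS f Sf y).
  have b : mU x <= - hi (l x).
    apply: (mU2 _ Ll2) => _ [f Sf <-] y /=.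
    by rewrite leeN2; case: (lS f Sf y).
  rewrite leeNr in b.
  exact: le_trans a (le_trans (lo_le_hi _) b).
pose s := fun x => Ival (pf x).
exists s; split.
  apply/Dcont_iff; split => //=.
  have -> : (fun y => - hi (s y)) = mU by apply: funext => y /=; rewrite oppeK.
  exact: LmU.
split.
  move=> f Sf x; split => /=.
    exact: (mL1 _ (imageP (fun f => (fun y => lo (f y))) Sf) x).
  rewrite leeNl; exact: (mU1 _ (imageP (fun f => (fun y => - hi (f y))) Sf) x).
move=> u Gu uf x; have [Lu1 Lu2] := G_Lc Gu; split => /=.
  by apply: (mL2 _ Lu1) => _ [f Sf <-] y; case: (uf f Sf y).
rewrite leeNr; apply: (mU2 _ Lu2) => _ [f Sf <-] y /=.
by rewrite leeN2; case: (uf f Sf y).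
Qed.

Lemma dk_gen (P Q : Afun Omega -> Prop) :
  (forall f, P f <-> G Omega f /\ Q f) ->
  (forall a b, ival_incl Omega a b -> Q b -> Q a) ->
  dedekind_complete P (ival_incl Omega).
Proof.
move=> hP Qi; split.
- move=> S SP S0 [u [Pu uS]].
  have SG : S `<=` G Omega by move=> f /SP /hP [].
  have [s [Gs [sS sl]]] := sup_G SG S0.
  have [Gu Qu] := (hP u).1 Pu.
  exists s; split; first split.
  + by apply/hP; split => //; apply: Qi Qu; exact: sl.
  + exact: sS.
  by move=> u' [/hP [Gu' _] u'S]; apply: sl.
- move=> S SP [f0 Sf0] [l [Pl lS]].
  have SG : S `<=` G Omega by move=> f /SP /hP [].
  have [Gl Ql] := (hP l).1 Pl.
  have [s [Gs [sS sl]]] := inf_G SG Gl lS.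
  exists s; split; first split.
  + apply/hP; split => //; apply: Qi (sS f0 Sf0) _.
    by case: ((hP f0).1 (SP f0 Sf0)).
  + exact: sS.
  by move=> l' [/hP [Gl' _] l'S]; apply: sl.
Qed.

Lemma fin_between (l z u : \bar R) : l <= z -> z <= u ->
  l \is a fin_num -> u \is a fin_num -> z \is a fin_num.
Proof.
move=> lz zu /fin_numPlt/andP [l1 _] /fin_numPlt/andP [_ u1].
apply/fin_numPlt/andP; split; [exact: lt_le_trans l1 lz | exact: le_lt_trans zu u1].
Qed.

End GLevel.

Unset Implicit Arguments.
Theorem theorem16 (n : nat) (Omega : set (pt n)) (HO : is_open Omega) :
  dedekind_complete (G_bd Omega) (ival_incl Omega) /\
  dedekind_complete (G_ft Omega) (ival_incl Omega) /\
  dedekind_complete (G_nf Omega) (ival_incl Omega) /\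
  dedekind_complete (G Omega) (ival_incl Omega).
Proof.
split; last split; last split.
- apply: (@dk_gen n Omega _ (@bounded_fun n Omega)) => // a b ab [M HM].
  exists M => x; have [h1 h2] := ab x; have [m1 m2] := HM x; split.
    exact: le_trans m1 h1.
  exact: le_trans h2 m2.
- apply: (@dk_gen n Omega _ (@finite_fun n Omega)) => // a b ab HF x.
  have [h1 h2] := ab x; have [f1 f2] := HF x; have la := lo_le_hi (a x).
  split.
    apply: fin_between h1 _ f1 f2; exact: le_trans la h2.
  apply: fin_between _ h2 f1 f2; exact: le_trans h1 la.
- apply: (@dk_gen n Omega _ (@nearly_finite_fun n Omega)) => // a b ab [D [oD [dD HF]]].
  exists D; split => //; split => // x Dx.
  have [h1 h2] := ab x; have [f1 f2] := HF x Dx; have la := lo_le_hi (a x).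
  split.
    apply: fin_between h1 _ f1 f2; exact: le_trans la h2.
  apply: fin_between _ h2 f1 f2; exact: le_trans h1 la.
- apply: (@dk_gen n Omega _ (fun _ => True)) => // f; split; [by move=> Gf; split | by case].
Qed.
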